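(* For every $k\ge1$ and every smooth periodic function $y$, with $Y=\mathrm{diag}(y(x_0),\dots,y(x_{N-1}))$, the commutator $[D_k,Y]=D_kY-YD_k$ has height at most $k-1$, i.e. $\mathrm{ht}([D_k,Y])\le k-1$.
   Context: Uniform periodic grid $x_j=a+(b-a)\frac jN$, $j=0,\dots,N-1$. $D_F=N\cdot M$ where $M$ is the $N\times N$ circulant matrix with $-1$ on the diagonal, $1$ on the superdiagonal and $1$ in the bottom-left corner (so $(D_Fu)_j=N(u_{j+1}-u_j)$ with periodic indices); $D_B=-D_F^\dagger$; $D_2=D_BD_F=D_FD_B$ ($N^2$ times the periodic circulant with $-2$ on the diagonal and $1$ on both off-diagonals). Higher differences: $D_k=D_2^{k/2}$ for $k$ even and $D_k=D_FD_2^{(k-1)/2}$ for $k$ odd. An $N\times N$ matrix (family indexed by $N$) $P$ has height $m$ if $m$ is the highest order such that $\|P\|_2$ grows as $N^m$ as $N\to\infty$; thus $\mathrm{ht}(P)\le m$ means $\|P\|_2=O(N^m)$ as $N\to\infty$. *)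

(* Defs.v *)
From HB Require Import structures.
From mathcomp Require Import all_boot all_order all_algebra.
From mathcomp Require Import all_classical all_reals all_analysis.
Set Implicit Arguments. Unset Strict Implicit. Unset Printing Implicit Defensive.
Import Order.TTheory GRing.Theory Num.Theory.
Local Open Scope ring_scope.

Section Defs.
Variable R : realType.

Definition smooth (y : R -> R) : Prop :=
  forall (n : nat) (x : R), derivable (derive1n n y) x 1.

Definition periodic_with (p : R) (y : R -> R) : Prop :=
  forall x : R, y (x + p) = y x.

Definition grid (a b : R) (N j : nat) : R := a + (b - a) * j%:R / N%:R.

Definition Ymat (a b : R) (y : R -> R) (N : nat) : 'M[R]_N :=
  diag_mx (\row_(j < N) y (grid a b N j)).

(* D_F = N * M, M circulant: -1 on diagonal, 1 on superdiagonal and bottom-left *)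
Definition DF (N : nat) : 'M[R]_N :=
  \matrix_(i < N, j < N)
    (N%:R * ((j == (i.+1 %% N)%N :> nat)%:R - (j == i :> nat)%:R)).

(* D_B = - D_F^dagger (real matrices: adjoint = transpose) *)
Definition DB (N : nat) : 'M[R]_N := - (DF N)^T.

Definition D2 (N : nat) : 'M[R]_N := DB N *m DF N.

Definition mxpow (N : nat) (A : 'M[R]_N) (k : nat) : 'M[R]_N :=
  iter k (fun B => A *m B) 1%:M.

Definition Dk (N k : nat) : 'M[R]_N :=
  if odd k then DF N *m mxpow (D2 N) k./2 else mxpow (D2 N) k./2.

Definition commutator (N : nat) (A B : 'M[R]_N) : 'M[R]_N := A *m B - B *m A.

Definition vnorm2 (N : nat) (v : 'cV[R]_N) : R :=
  Num.sqrt (\sum_(i < N) (v i ord0) ^+ 2).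

(* ht(P) <= m : ||P_N||_2 = O(N^m) as N -> oo, with ||.||_2 the operator norm
   induced by the Euclidean vector norm (written out: ||P_N v|| <= C N^m ||v||). *)
Definition height_le (P : forall N : nat, 'M[R]_N) (m : nat) : Prop :=
  exists (C : R) (N0 : nat), forall (N : nat), (N0 <= N)%N ->
    forall v : 'cV[R]_N, vnorm2 (P N *m v) <= C * N%:R ^+ m * vnorm2 v.

End Defs.

(* Main.v *)
Require Import Defs.
From HB Require Import structures.
From mathcomp Require Import all_boot all_order all_algebra.
From mathcomp Require Import all_classical all_reals all_analysis.
From mathcomp Require Import ring lra zify.
Set Implicit Arguments. Unset Strict Implicit.
Import Order.TTheory GRing.Theory Num.Theory.
Local Open Scope classical_set_scope.
Local Open Scope ring_scope.

Lemma lip (R : realType) (a b : R) (y : R -> R) (hab : a <= b) (hy : smooth y) :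
  exists M : R, 0 <= M /\ forall u w, a <= u -> u <= w -> w <= b ->
     `|y w - y u| <= M * (w - u).
Proof.
have dy : forall x, derivable y x 1 by move=> x; exact: (hy 0%N x).
have ddy : forall x, derivable (derive1 y) x 1 by move=> x; exact: (hy 1%N x).
have cdy := @derivable_within_continuous R R (derive1 y) `[a, b]%R (fun x _ => ddy x).
have [cM cMab HM] := EVT_max hab cdy.
have [cm cmab Hm] := EVT_min hab cdy.
exists (`|(derive1 y) cM| + `|(derive1 y) cm|); split; first by rewrite addr_ge0.
move=> u w au uw wb.
have [c cuw ->] : exists2 c, c \in `[u, w]%R & y w - y u = (derive1 y) c * (w - u).
  apply: MVT_segment => //.
    move=> x _; rewrite derive1E; exact: derivableP.
  exact: (@derivable_within_continuous R R y `[u, w]%R (fun x _ => dy x)).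
have cab : c \in `[a, b]%R.
  rewrite in_itv /=; apply/andP; split.
    by apply: le_trans au _; rewrite (itvP cuw).
  by apply: le_trans wb; rewrite (itvP cuw).
rewrite normrM (ger0_norm (x:=w - u)) ?subr_ge0 //.
apply: ler_wpM2r; first by rewrite subr_ge0.
have h1 := HM c cab; have h2 := Hm c cab.
rewrite ler_norml; apply/andP; split.
  apply: le_trans h2; rewrite lerNl; apply: le_trans (ler_norm _) _.
  by rewrite normrN lerDr.
apply: le_trans h1 _; apply: le_trans (ler_norm _) _.
by rewrite lerDl.
Qed.
Definition Qn (R : realType) (N : nat) (v : 'cV[R]_N) : R :=
  \sum_(i < N) (v i ord0) ^+ 2.
Arguments Qn {R N}.

Definition Pb (R : realType) (N : nat) (A : 'M[R]_N) (c : R) : Prop :=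
  forall v : 'cV[R]_N, Qn (A *m v) <= c * Qn v.
Arguments Pb {R N}.

Lemma Qn_ge0 (R : realType) N (v : 'cV[R]_N) : 0 <= Qn v.
Proof. by apply: sumr_ge0 => i _; exact: sqr_ge0. Qed.

Lemma Pb_mul (R : realType) N (A B : 'M[R]_N) c d :
  0 <= c -> Pb A c -> Pb B d -> Pb (A *m B) (c * d).
Proof.
move=> c0 hA hB v; rewrite -mulmxA; apply: le_trans (hA _) _.
by rewrite -mulrA ler_wpM2l.
Qed.

Lemma Pb_add (R : realType) N (A B : 'M[R]_N) c d :
  Pb A c -> Pb B d -> Pb (A + B) (2 * c + 2 * d).
Proof.
move=> hA hB v; rewrite mulmxDl.
apply: (@le_trans _ _ (2 * Qn (A *m v) + 2 * Qn (B *m v))).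
  rewrite /Qn !mulr_sumr -big_split /=; apply: ler_sum => i _; rewrite mxE.
  set p := (A *m v) i ord0; set q := (B *m v) i ord0.
  have := sqr_ge0 (p - q); nra.
have := hA v; have := hB v; lra.
Qed.

Lemma Pb_opp (R : realType) N (A : 'M[R]_N) c : Pb A c -> Pb (- A) c.
Proof.
move=> hA v; rewrite mulNmx; apply: le_trans (hA v).
by rewrite le_eqVlt; apply/orP; left; apply/eqP; apply: eq_bigr => i _; rewrite mxE sqrrN.
Qed.

Lemma Pb_scale (R : realType) N (A : 'M[R]_N) c s : Pb A c -> Pb (s *: A) (s ^+ 2 * c).
Proof.
move=> hA v; rewrite -scalemxAl.
have -> : Qn (s *: (A *m v)) = s ^+ 2 * Qn (A *m v).
  by rewrite /Qn mulr_sumr; apply: eq_bigr => i _; rewrite mxE exprMn.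
by rewrite -mulrA ler_wpM2l ?sqr_ge0.
Qed.

Lemma Pb_le (R : realType) N (A : 'M[R]_N) c d : c <= d -> Pb A c -> Pb A d.
Proof.
move=> cd hA v; apply: le_trans (hA v) _; apply: ler_wpM2r => //; exact: Qn_ge0.
Qed.

Lemma Pb_diag (R : realType) N (e : 'rV[R]_N) c :
  (forall i, e 0 i ^+ 2 <= c) -> Pb (diag_mx e) c.
Proof.
move=> he v; rewrite mul_diag_mx /Qn mulr_sumr; apply: ler_sum => i _.
rewrite mxE exprMn; apply: ler_wpM2r; [exact: sqr_ge0 | exact: he].
Qed.

Definition Sh (R : realType) N : 'M[R]_N := \matrix_(i, j) (j == ordS i)%:R.

Lemma Sh_mul (R : realType) N (v : 'cV[R]_N) i : (Sh R N *m v) i ord0 = v (ordS i) ord0.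
Proof.
rewrite mxE (bigD1 (ordS i)) //= mxE eqxx mul1r big1 ?addr0 // => j /negbTE hj.
by rewrite mxE hj mul0r.
Qed.

Lemma ShT_mul (R : realType) N (v : 'cV[R]_N) i : ((Sh R N)^T *m v) i ord0 = v (ord_pred i) ord0.
Proof.
rewrite mxE (bigD1 (ord_pred i)) //= !mxE ord_predK eqxx mul1r big1 ?addr0 // => j hj.
rewrite !mxE; case: eqP; last by rewrite mul0r.
by move=> e; move: hj; rewrite e ordSK eqxx.
Qed.

Lemma Pb_Sh (R : realType) N : Pb (Sh R N) 1.
Proof.
move=> v; rewrite mul1r /Qn; under eq_bigr => i _ do rewrite Sh_mul.
by rewrite [X in _ <= X](reindex_inj (@ordS_inj N)).
Qed.

Lemma Pb_ShT (R : realType) N : Pb (Sh R N)^T 1.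
Proof.
move=> v; rewrite mul1r /Qn; under eq_bigr => i _ do rewrite ShT_mul.
by rewrite [X in _ <= X](reindex_inj (@ord_pred_inj N)).
Qed.

Lemma Pb_1 (R : realType) N : Pb (1%:M : 'M[R]_N) 1.
Proof. by move=> v; rewrite mul1mx mul1r. Qed.

Lemma Pb_0 (R : realType) N c : 0 <= c -> Pb (0 : 'M[R]_N) c.
Proof.
move=> c0 v; rewrite mul0mx /Qn big1 ?mulr_ge0 ?Qn_ge0 // => i _.
by rewrite mxE expr0n.
Qed.

Lemma DF_Sh (R : realType) N : DF R N = N%:R *: (Sh R N - 1%:M).
Proof.
apply/matrixP => i j; rewrite !mxE [i == j]eq_sym.
by [].
Qed.

Lemma DB_Sh (R : realType) N : DB R N = N%:R *: (1%:M - (Sh R N)^T).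
Proof.
apply/matrixP => i j; rewrite /DB DF_Sh !mxE [i == j]eq_sym; ring.
Qed.

Lemma comm_Sh (R : realType) N (d : 'rV[R]_N) :
  commutator (Sh R N) (diag_mx d) = diag_mx (\row_i (d 0 (ordS i) - d 0 i)) *m Sh R N.
Proof.
apply/matrixP => i j; rewrite /commutator mul_mx_diag !mul_diag_mx !mxE.
case: eqP => [->|_]; first ring.
by rewrite !(mulr0, mul0r, subrr).
Qed.

Lemma comm_ShT (R : realType) N (d : 'rV[R]_N) :
  commutator (diag_mx d) (Sh R N)^T = (Sh R N)^T *m diag_mx (\row_i (d 0 (ordS i) - d 0 i)).
Proof.
apply/matrixP => i j; rewrite /commutator !mul_mx_diag !mul_diag_mx !mxE.
case: eqP => [->|_]; first ring.
by rewrite !(mulr0, mul0r, subrr).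
Qed.

Lemma comm_DF (R : realType) N (d : 'rV[R]_N) :
  commutator (DF R N) (diag_mx d) =
  N%:R *: (diag_mx (\row_i (d 0 (ordS i) - d 0 i)) *m Sh R N).
Proof.
rewrite -comm_Sh /commutator DF_Sh -scalemxAl -scalemxAr -scalerBr.
by rewrite mulmxBl mulmxBr mul1mx mulmx1 opprB addrA subrK.
Qed.

Lemma comm_DB (R : realType) N (d : 'rV[R]_N) :
  commutator (DB R N) (diag_mx d) =
  N%:R *: ((Sh R N)^T *m diag_mx (\row_i (d 0 (ordS i) - d 0 i))).
Proof.
rewrite -comm_ShT /commutator DB_Sh -scalemxAl -scalemxAr -scalerBr.
by rewrite mulmxBl mulmxBr mul1mx mulmx1 opprB addrC addrA subrK.
Qed.

Lemma grid_step (R : realType) (a b : R) (y : R -> R)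
  (hper : periodic_with (b - a) y) N (i : 'I_N) :
  y (grid a b N (ordS i)) = y (grid a b N i + (b - a) / N%:R).
Proof.
have N0 : (0 < N)%N by case: i => /= i; case: N => //.
have nz : N%:R != 0 :> R by rewrite pnatr_eq0 -lt0n.
rewrite /grid /=.
have [lt|eq] : (i.+1 < N)%N \/ i.+1 = N.
  by case: i => /= i hi; rewrite leq_eqVlt in hi; case/orP: hi => [/eqP->|->]; auto.
  rewrite modn_small // -natr1; congr y; ring.
rewrite eq modnn mulr0 mul0r addr0.
have -> : a + (b - a) * i%:R / N%:R + (b - a) / N%:R = a + (b - a) * (i%:R + 1) / N%:R by ring.
by rewrite natr1 eq mulfK // hper.
Qed.

Lemma eq_le' (R : realType) (x y : R) : x = y -> x <= y.
Proof. by move=> ->. Qed.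

Lemma e_bound (R : realType) (a b : R) (y : R -> R) (hab : a < b)
  (hper : periodic_with (b - a) y) (M : R) (hM : 0 <= M)
  (hL : forall u w, a <= u -> u <= w -> w <= b -> `|y w - y u| <= M * (w - u))
  N (i : 'I_N) :
  (y (grid a b N (ordS i)) - y (grid a b N i)) ^+ 2 <= (M * (b - a) / N%:R) ^+ 2.
Proof.
have N0 : (0 < N)%N by case: i => /= i; case: N => //.
have n0 : 0 < N%:R :> R by rewrite ltr0n.
rewrite grid_step //.
set x := grid a b N i; set h := (b - a) / N%:R.
have ba : 0 <= b - a by rewrite subr_ge0 ltW.
have h0 : 0 <= h by rewrite /h divr_ge0 // ltW.
have i0 : 0 <= i%:R :> R by [].
have ax : a <= x.
  by rewrite /x /grid lerDl mulr_ge0 // ?invr_ge0 ?mulr_ge0 // ltW.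
have xhb : x + h <= b.
  have t1 : (i%:R + 1) / N%:R <= 1 :> R.
    by rewrite ler_pdivrMr // mul1r natr1 ler_nat ltn_ord.
  have -> : x + h = a + (b - a) * ((i%:R + 1) / N%:R) by rewrite /x /h /grid; ring.
  have := ler_wpM2l ba t1; lra.
have hx : x <= x + h by lra.
have := hL x (x + h) ax hx xhb.
have -> : x + h - x = h by ring.
set e := y (x + h) - y x => he.
have hn := real_normK (num_real e).
have e0 : 0 <= `|e| by [].
have -> : M * (b - a) / N%:R = M * h by rewrite /h mulrA.
nra.
Qed.

Definition Good (R : realType) (a b : R) (y : R -> R) (F : forall N, 'M[R]_N) (p : nat) :=
  exists al al' : R, 0 <= al /\ 0 <= al' /\ forall N, (0 < N)%N ->
    Pb (F N) (al * N%:R ^+ (2 * p)) /\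
    Pb (commutator (F N) (Ymat a b y N)) (al' * N%:R ^+ (2 * p) / N%:R ^+ 2).
Arguments Good {R}.

Lemma Good_eq (R : realType) (a b : R) (y : R -> R) F p q :
  p = q -> Good a b y F p -> Good a b y F q.
Proof. by move=> ->. Qed.

Lemma comm_mul (R : realType) N (A B C : 'M[R]_N) :
  commutator (A *m B) C = A *m commutator B C + commutator A C *m B.
Proof.
by rewrite /commutator mulmxBr mulmxBl !mulmxA addrA subrK.
Qed.

Lemma Good_mul (R : realType) (a b : R) (y : R -> R) F G p q :
  Good a b y F p -> Good a b y G q -> Good a b y (fun N => F N *m G N) (p + q).
Proof.
move=> [al [al' [h0 [h0' hF]]]] [be [be' [g0 [g0' hG]]]].
exists (al * be), (2 * al * be' + 2 * al' * be).
split; first exact: mulr_ge0.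
split; first by apply: addr_ge0; apply: mulr_ge0 => //; apply: mulr_ge0.
move=> N N0; have [hA hcA] := hF N N0; have [hB hcB] := hG N N0.
have n0 : 0 < N%:R :> R by rewrite ltr0n.
have p0 : 0 <= al * N%:R ^+ (2 * p) by rewrite mulr_ge0 // exprn_ge0 // ltW.
have p0' : 0 <= al' * N%:R ^+ (2 * p) / N%:R ^+ 2
  by rewrite !mulr_ge0 // ?invr_ge0 exprn_ge0 // ltW.
split.
  apply: (Pb_le _ (Pb_mul p0 hA hB)); apply: eq_le'.
  by rewrite mulnDr exprD; ring.
rewrite comm_mul; apply: Pb_le (Pb_add (Pb_mul p0 hA hcB) (Pb_mul p0' hcA hB)).
by apply: eq_le'; rewrite mulnDr exprD; ring.
Qed.

Lemma Good_one (R : realType) (a b : R) (y : R -> R) : Good a b y (fun N => 1%:M) 0.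
Proof.
exists 1, 0; split => //; split => // N N0; split.
  by apply: (Pb_le _ (@Pb_1 R N)); rewrite muln0 expr0 mulr1.
rewrite /commutator mul1mx mulmx1 subrr !mul0r; exact: Pb_0.
Qed.

Lemma Good_DF (R : realType) (a b : R) (y : R -> R) (hab : a < b)
  (hper : periodic_with (b - a) y) (M : R) (hM : 0 <= M)
  (hL : forall u w, a <= u -> u <= w -> w <= b -> `|y w - y u| <= M * (w - u)) :
  Good a b y (fun N => DF R N) 1.
Proof.
exists 4, ((M * (b - a)) ^+ 2); split => //; split; first exact: sqr_ge0.
move=> N N0; have n0 : N%:R != 0 :> R by rewrite pnatr_eq0 -lt0n.
split.
  rewrite DF_Sh; apply: (Pb_le _ (Pb_scale _ (Pb_add (@Pb_Sh R N) (Pb_opp (@Pb_1 R N))))).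
  by apply: eq_le'; rewrite muln1; ring.
rewrite /Ymat comm_DF.
apply: (Pb_le _ (Pb_scale _ (Pb_mul (sqr_ge0 (M * (b - a) / N%:R)) (Pb_diag _) (@Pb_Sh R N)))).
  by apply: eq_le'; rewrite muln1; field.
by move=> i; rewrite !mxE; exact: e_bound.
Qed.

Lemma Good_DB (R : realType) (a b : R) (y : R -> R) (hab : a < b)
  (hper : periodic_with (b - a) y) (M : R) (hM : 0 <= M)
  (hL : forall u w, a <= u -> u <= w -> w <= b -> `|y w - y u| <= M * (w - u)) :
  Good a b y (fun N => DB R N) 1.
Proof.
exists 4, ((M * (b - a)) ^+ 2); split => //; split; first exact: sqr_ge0.
move=> N N0; have n0 : N%:R != 0 :> R by rewrite pnatr_eq0 -lt0n.
split.
  rewrite DB_Sh; apply: (Pb_le _ (Pb_scale _ (Pb_add (@Pb_1 R N) (Pb_opp (@Pb_ShT R N))))).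
  by apply: eq_le'; rewrite muln1; ring.
rewrite /Ymat comm_DB.
apply: (Pb_le _ (Pb_scale _ (Pb_mul ler01 (@Pb_ShT R N) (Pb_diag (c := (M * (b - a) / N%:R) ^+ 2) _)))).
  by apply: eq_le'; rewrite muln1; field.
by move=> i; rewrite !mxE; exact: e_bound.
Qed.

Lemma Good_pow (R : realType) (a b : R) (y : R -> R) (hab : a < b)
  (hper : periodic_with (b - a) y) (M : R) (hM : 0 <= M)
  (hL : forall u w, a <= u -> u <= w -> w <= b -> `|y w - y u| <= M * (w - u)) m :
  Good a b y (fun N => mxpow (D2 R N) m) (2 * m).
Proof.
elim: m => [|m IH]; first exact: Good_one.
have hD2 : Good a b y (fun N => D2 R N) 2.
  exact: (Good_mul (Good_DB hab hper hM hL) (Good_DF hab hper hM hL)).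
apply: Good_eq (Good_mul hD2 IH); by rewrite mulnS.
Qed.

Lemma Good_Dk (R : realType) (a b : R) (y : R -> R) (hab : a < b)
  (hper : periodic_with (b - a) y) (M : R) (hM : 0 <= M)
  (hL : forall u w, a <= u -> u <= w -> w <= b -> `|y w - y u| <= M * (w - u)) k :
  Good a b y (fun N => Dk R N k) k.
Proof.
have hk := odd_double_half k.
rewrite /Dk; case E : (odd k) hk => hk.
  apply: Good_eq (Good_mul (Good_DF hab hper hM hL) (Good_pow hab hper hM hL k./2)).
  by move: hk => /=; rewrite -muln2; lia.
apply: Good_eq (Good_pow hab hper hM hL k./2).
by move: hk => /=; rewrite -muln2; lia.
Qed.

Unset Implicit Arguments.

Theorem lemma4p5 (R : realType) (a b : R) (hab : a < b) (y : R -> R)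
  (hy : smooth y) (hper : periodic_with (b - a) y) (k : nat) (hk : (1 <= k)%N) :
  height_le (fun N : nat => commutator (Dk R N k) (Ymat a b y N)) (k - 1).
Proof.
have [M [hM hL]] := lip (ltW hab) hy.
have [al [al' [h0 [h0' hG]]]] := Good_Dk hab hper hM hL k.
exists (Num.sqrt al'), 1%N => N N0 v.
have [_ hc] := hG N N0.
have n0 : 0 < N%:R :> R by rewrite ltr0n.
rewrite /vnorm2.
apply: le_trans (ler_wsqrtr (hc v)) _.
have -> : al' * N%:R ^+ (2 * k) / N%:R ^+ 2 = al' * (N%:R ^+ (k - 1)) ^+ 2.
  have -> : (2 * k = (k - 1) * 2 + 2)%N by lia.
  rewrite exprD -exprM; field; by rewrite gt_eqF.
rewrite (@sqrtrM R (al' * _) (Qn v)); last by rewrite mulr_ge0 // sqr_ge0.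
rewrite (@sqrtrM R al') // sqrtr_sqr ger0_norm //.
Qed.
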